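(* For every integer $k\ge1$ there is a constant $C>0$ such that for every $r\ge1$ and every non-negative $C^2$ function $u$ on the disk $D_r=\{z\in\mathbb C:|z|<r\}$ satisfying $\Delta u=2(e^u-e^{(1-k)u})$, one has $u(0)\le C/r^2$.
   Context: $\Delta=\partial_x^2+\partial_y^2$ is the Euclidean Laplacian. *)

(* Defs.v *)
From Stdlib Require Import Reals.
From Coquelicot Require Import Coquelicot.
Open Scope R_scope.

(* A function on the plane R^2 = C, written u x y for u(x + i y). *)

Definition in_disk (r x y : R) : Prop := x ^ 2 + y ^ 2 < r ^ 2.

Definition dx (u : R -> R -> R) : R -> R -> R := fun x y => Derive (fun t => u t y) x.
Definition dy (u : R -> R -> R) : R -> R -> R := fun x y => Derive (fun t => u x t) y.

Definition cont2 (f : R -> R -> R) (x y : R) : Prop :=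
  continuous (fun p : R * R => f (fst p) (snd p)) (x, y).

Definition C2_at (u : R -> R -> R) (x y : R) : Prop :=
  ex_derive (fun t => u t y) x /\ ex_derive (fun t => u x t) y /\
  ex_derive (fun t => dx u t y) x /\ ex_derive (fun t => dx u x t) y /\
  ex_derive (fun t => dy u t y) x /\ ex_derive (fun t => dy u x t) y /\
  cont2 u x y /\ cont2 (dx u) x y /\ cont2 (dy u) x y /\
  cont2 (dx (dx u)) x y /\ cont2 (dy (dx u)) x y /\
  cont2 (dx (dy u)) x y /\ cont2 (dy (dy u)) x y.

Definition C2_on_disk (r : R) (u : R -> R -> R) : Prop :=
  forall x y, in_disk r x y -> C2_at u x y.

Definition laplacian (u : R -> R -> R) : R -> R -> R :=
  fun x y => dx (dx u) x y + dy (dy u) x y.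

(* Main.v *)
Require Import Defs.
From Stdlib Require Import Reals Lra Psatz Classical List ClassicalEpsilon.
From Coquelicot Require Import Coquelicot.
Open Scope R_scope.

Definition Gf (s x : R) := 48 * s^2 / (s^2 - x^2)^2.
Definition G1 (s x : R) := 192 * s^2 * x / (s^2 - x^2)^3.
Definition G2 (s x : R) := 192 * s^2 * ((s^2 - x^2) + 6*x^2) / (s^2 - x^2)^4.

Lemma Gf_der s x : s^2 - x^2 <> 0 -> is_derive (Gf s) x (G1 s x).
Proof. intros H. unfold Gf, G1. auto_derive; assert (E : s*(s*1) + -(x*(x*1)) = s^2-x^2) by ring; rewrite ?E.
  - repeat apply Rmult_integral_contrapositive_currified; auto; lra.
  - field. auto. Qed.

Lemma G1_der s x : s^2 - x^2 <> 0 -> is_derive (G1 s) x (G2 s x).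
Proof. intros H. unfold G1, G2. auto_derive; assert (E : s*(s*1) + -(x*(x*1)) = s^2-x^2) by ring; rewrite ?E.
  - repeat apply Rmult_integral_contrapositive_currified; auto; lra.
  - field. auto. Qed.

Lemma G2_le s x : 0 < s^2 - x^2 -> G2 s x <= Gf s x ^ 2 / 2.
Proof.
  intros H.
  assert (E : Gf s x ^ 2 / 2 - G2 s x = 960 * s^2 * (s^2 - x^2) / (s^2 - x^2)^4).
  { unfold Gf, G2. field. lra. }
  assert (0 <= 960 * s^2 * (s^2 - x^2) / (s^2 - x^2)^4).
  { apply Rmult_le_pos. apply Rmult_le_pos; [nra|lra]. left. apply Rinv_0_lt_compat. apply pow_lt. auto. }
  lra.
Qed.

Lemma Gf_pos s x : 0 < s^2 - x^2 -> 0 <= Gf s x.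
Proof. intros H. unfold Gf. apply Rmult_le_pos; [nra|]. left. apply Rinv_0_lt_compat. apply pow_lt. auto. Qed.
Lemma sdmax (f df : R -> R) x0 l d : 0 < d ->
 (forall x, Rabs (x - x0) < d -> derivable_pt_lim f x (df x)) ->
 derivable_pt_lim df x0 l ->
 (forall x, Rabs (x - x0) < d -> f x <= f x0) -> l <= 0.
Proof.
 intros Hd Hf Hdf Hmax. destruct (Rle_or_lt l 0) as [|Hl]; [auto|exfalso].
 destruct (Hdf (l/2) ltac:(lra)) as [[e He] Hde]. simpl in Hde.
 set (e' := Rmin e d / 2).
 assert (He1 : 0 < e') by (unfold e'; apply Rmin_case; lra).
 assert (He2 : e' < e) by (unfold e'; generalize (Rmin_l e d); lra).
 assert (He3 : e' < d) by (unfold e'; generalize (Rmin_r e d); lra).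
 assert (Hq : forall c, c <> x0 -> Rabs (c - x0) < e ->
   (df c - df x0) / (c - x0) > l/2).
 { intros c Hc Hce. assert (c - x0 <> 0) by lra.
   specialize (Hde (c - x0) H Hce). replace (x0 + (c - x0)) with c in Hde by ring.
   apply Rabs_def2 in Hde. lra. }
 destruct (Rle_or_lt 0 (df x0)) as [H0|H0].
 - destruct (MVT_cor2 f df x0 (x0 + e') ltac:(lra)) as [c [Hc1 Hc2]].
   { intros c Hc. apply Hf. rewrite Rabs_right; lra. }
   assert (Hqc := Hq c ltac:(lra) ltac:(rewrite Rabs_right; lra)).
   assert (E : df c - df x0 = (df c - df x0) / (c - x0) * (c - x0)) by (field; lra).
   assert (df c > 0) by nra.
   assert (Hm := Hmax (x0 + e') ltac:(rewrite Rabs_right; lra)).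
   nra.
 - destruct (MVT_cor2 f df (x0 - e') x0 ltac:(lra)) as [c [Hc1 Hc2]].
   { intros c Hc. apply Hf. rewrite Rabs_left1; lra. }
   assert (Hqc := Hq c ltac:(lra) ltac:(rewrite Rabs_left1; lra)).
   assert (E : df c - df x0 = (df c - df x0) / (c - x0) * (c - x0)) by (field; lra).
   assert (df c < 0) by nra.
   assert (Hm := Hmax (x0 - e') ltac:(rewrite Rabs_left1; lra)).
   nra.
Qed.
Lemma cont2_eps F x y : cont2 F x y -> forall eps:posreal, exists d:posreal,
  forall x' y', Rabs (x'-x) < d -> Rabs (y'-y) < d -> Rabs (F x' y' - F x y) < eps.
Proof.
  intros H eps. specialize (H _ (locally_ball (F x y) eps)). destruct H as [d Hd].
  exists d. intros x' y' H1 H2. apply (Hd (x',y')). split; simpl; assumption.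
Qed.

Definition rect a b c d x y := a <= x <= b /\ c <= y <= d.

Fixpoint lmax (F : R -> R -> R) (l : list (Compactness.Tn 2 R)) : R :=
  match l with
  | nil => 0
  | t :: l' => Rmax (F (fst t) (fst (snd t))) (lmax F l')
  end.

Lemma lmax_in F l t : In t l -> F (fst t) (fst (snd t)) <= lmax F l.
Proof.
  induction l as [|t' l IH]; simpl; [tauto|]. intros [->|H].
  - apply Rmax_l.
  - eapply Rle_trans; [apply IH; auto| apply Rmax_r].
Qed.

Lemma bnd2 F a b c d : (forall x y, rect a b c d x y -> cont2 F x y) ->
  exists B, forall x y, rect a b c d x y -> F x y <= B.
Proof.
  intros Hc.
  assert (H : forall t : Compactness.Tn 2 R, exists del : posreal,
    Compactness.bounded_n 2 (a,(c,tt)) (b,(d,tt)) t ->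
    forall x, Compactness.close_n 2 del x t ->
      F (fst x) (fst (snd x)) < F (fst t) (fst (snd t)) + 1).
  { intros [t1 [t2 []]].
    destruct (classic (rect a b c d t1 t2)) as [Hr|Hr].
    - destruct (cont2_eps _ _ _ (Hc _ _ Hr) (mkposreal 1 Rlt_0_1)) as [del Hd].
      exists del. intros _ [x1 [x2 []]] [H1 [H2 _]]. simpl in *.
      specialize (Hd x1 x2 H1 H2). apply Rabs_def2 in Hd. simpl in Hd. lra.
    - exists (mkposreal 1 Rlt_0_1). intros Hb. exfalso. apply Hr.
      simpl in Hb. unfold rect. tauto. }
  set (del := fun t => proj1_sig (constructive_indefinite_description _ (H t))).
  assert (Hdel : forall t, Compactness.bounded_n 2 (a,(c,tt)) (b,(d,tt)) t ->
    forall x, Compactness.close_n 2 (del t) x t ->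
      F (fst x) (fst (snd x)) < F (fst t) (fst (snd t)) + 1).
  { intros t. unfold del. destruct (constructive_indefinite_description _ (H t)). simpl. auto. }
  assert (Hl := Compactness.compactness_list 2 (a,(c,tt)) (b,(d,tt)) del).
  apply NNPP. intro Hn. apply Hl. intros [l Hlp]. apply Hn.
  exists (lmax F l + 1). intros x y Hr.
  destruct (Hlp (x,(y,tt))) as [t [Ht1 [Ht2 Ht3]]].
  { simpl. unfold rect in Hr. tauto. }
  specialize (Hdel t Ht2 _ Ht3). simpl in Hdel.
  generalize (lmax_in F l t Ht1). lra.
Qed.

Lemma evt2 F a b c d : a <= b -> c <= d -> (forall x y, rect a b c d x y -> cont2 F x y) ->
  exists x0 y0, rect a b c d x0 y0 /\ forall x y, rect a b c d x y -> F x y <= F x0 y0.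
Proof.
  intros Hab Hcd Hc.
  destruct (bnd2 F a b c d Hc) as [B HB].
  set (E := fun v => exists x y, rect a b c d x y /\ v = F x y).
  assert (HEb : bound E). { exists B. intros v [x [y [Hr ->]]]. auto. }
  assert (HEn : exists v, E v). { exists (F a c). exists a, c. split; [unfold rect; lra|auto]. }
  destruct (completeness E HEb HEn) as [M [HM1 HM2]].
  apply NNPP. intro Hn.
  assert (Hlt : forall x y, rect a b c d x y -> F x y < M).
  { intros x y Hr. assert (F x y <= M) by (apply HM1; exists x, y; auto).
    destruct H; auto. exfalso. apply Hn. exists x, y. split; auto.
    intros x' y' Hr'. rewrite H. apply HM1. exists x', y'; auto. }
  destruct (bnd2 (fun x y => / (M - F x y)) a b c d) as [B' HB'].
  { intros x y Hr. unfold cont2.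
    apply (continuous_comp (fun z : R*R => M - F (fst z) (snd z)) (fun v => / v) (x,y)).
    - apply (continuous_minus (fun _ : R*R => M) (fun z : R*R => F (fst z) (snd z))).
      + apply continuous_const.
      + apply Hc; auto.
    - apply continuous_Rinv. simpl. specialize (Hlt x y Hr). lra. }
  assert (HB'p : 0 < B').
  { eapply Rlt_le_trans; [|apply (HB' a c)]; [|unfold rect; lra].
    apply Rinv_0_lt_compat. assert (Hr : rect a b c d a c) by (unfold rect; lra).
    specialize (Hlt a c Hr). lra. }
  assert (HM3 : ~ is_upper_bound E (M - / B')).
  { intro Hu. specialize (HM2 _ Hu). assert (0 < / B') by (apply Rinv_0_lt_compat; auto). lra. }
  apply HM3. intros v [x [y [Hr ->]]].
  specialize (Hlt x y Hr). specialize (HB' x y Hr). simpl in HB'.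
  apply Rnot_lt_le. intro Hv.
  assert (0 < M - F x y) by lra.
  assert (M - F x y < / B') by lra.
  assert (/ / B' < / (M - F x y)).
  { apply Rinv_lt_contravar; auto. apply Rmult_lt_0_compat; auto. apply Rinv_0_lt_compat; auto. }
  rewrite Rinv_inv in H1. lra.
Qed.

Lemma C2_dx u x y : C2_at u x y -> is_derive (fun t => u t y) x (dx u x y).
Proof. intros H. apply Derive_correct. apply H. Qed.
Lemma C2_dy u x y : C2_at u x y -> is_derive (fun t => u x t) y (dy u x y).
Proof. intros H. apply Derive_correct. apply H. Qed.
Lemma C2_dxx u x y : C2_at u x y -> is_derive (fun t => dx u t y) x (dx (dx u) x y).
Proof. intros H. apply Derive_correct. apply H. Qed.
Lemma C2_dyy u x y : C2_at u x y -> is_derive (fun t => dy u x t) y (dy (dy u) x y).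
Proof. intros H. apply Derive_correct. apply H. Qed.

Theorem proposition2p12 :
  forall k : nat, (1 <= k)%nat ->
  exists C : R, 0 < C /\
    forall (r : R) (u : R -> R -> R),
      1 <= r ->
      C2_on_disk r u ->
      (forall x y, in_disk r x y -> 0 <= u x y) ->
      (forall x y, in_disk r x y ->
         laplacian u x y = 2 * (exp (u x y) - exp ((1 - INR k) * u x y))) ->
      u 0 0 <= C / r ^ 2.
Proof.
  intros k Hk. exists 384. split; [lra|].
  intros r u Hr Hu Hpos Hlap.
  set (s := r / 2).
  assert (Hs : 0 < s) by (unfold s; lra).
  assert (Hsq : forall x y, -s <= x <= s -> -s <= y <= s -> in_disk r x y).
  { intros x y Hx Hy. unfold in_disk. replace r with (2 * s) by (unfold s; lra). nra. }
  set (h := fun x y => u x y - Gf s x - Gf s y).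
  assert (Hq : forall x, -s < x < s -> 0 < s^2 - x^2) by (intros; nra).
  assert (Hval : 384 / r^2 = 2 * Gf s 0).
  { unfold Gf. replace r with (2 * s) by (unfold s; lra). field. lra. }
  rewrite Hval.
  apply Rnot_lt_le. intro H0.
  assert (Hh0 : 0 < h 0 0) by (unfold h; lra).
  destruct (bnd2 u (-s) s (-s) s) as [B HB].
  { intros x y [Hx Hy]. apply Hu. apply Hsq; auto. }
  assert (HB0 : u 0 0 <= B) by (apply HB; split; lra).
  assert (HG00 : 0 <= Gf s 0) by (apply Gf_pos; apply Hq; lra).
  set (K := B - h 0 0 + 1).
  assert (HK : 1 <= K) by (unfold K, h in *; lra).
  set (del := Rmin (s^2/2) (Rmin 1 (48 * s^2 / K))).
  assert (Hd0 : 0 < del).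
  { unfold del. apply Rmin_case; [nra|]. apply Rmin_case; [lra|].
    apply Rmult_lt_0_compat; [nra|]. apply Rinv_0_lt_compat; lra. }
  assert (Hd1 : del <= s^2/2) by apply Rmin_l.
  assert (Hd2 : del <= 1) by (eapply Rle_trans; [apply Rmin_r|apply Rmin_l]).
  assert (Hd3 : del <= 48 * s^2 / K) by (eapply Rle_trans; [apply Rmin_r|apply Rmin_r]).
  set (t := sqrt (s^2 - del)).
  assert (Ht2 : t^2 = s^2 - del).
  { unfold t. rewrite <- Rsqr_pow2. apply Rsqr_sqrt. nra. }
  assert (Ht0 : 0 < t) by (unfold t; apply sqrt_lt_R0; nra).
  assert (Hts : t < s) by nra.
  assert (Hfar : forall x, -s < x < s -> ~ (-t <= x <= t) -> K <= Gf s x).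
  { intros x Hx Hnx.
    assert (Hx2 : t^2 < x^2).
    { destruct (Rle_or_lt x t); [assert (x < -t) by lra|]; nra. }
    set (q := s^2 - x^2).
    assert (Hq0 : 0 < q) by (apply Hq; auto).
    assert (Hqd : q < del) by (unfold q; lra).
    assert (Hq2 : q^2 <= 48 * s^2 / K) by nra.
    assert (HKq : K * q^2 <= 48 * s^2).
    { replace (48 * s^2) with (K * (48 * s^2 / K)) by (field; lra).
      apply Rmult_le_compat_l; lra. }
    assert (E : Gf s x - K = (48 * s^2 - K * q^2) / q^2).
    { unfold Gf, q. field. fold q. lra. }
    assert (0 <= (48 * s^2 - K * q^2) / q^2).
    { apply Rmult_le_pos; [lra|]. left. apply Rinv_0_lt_compat. nra. }
    lra. }
  destruct (evt2 h (-t) t (-t) t) as [a [b [Hab Hmax]]]; try lra.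
  { intros x y [Hx Hy]. unfold cont2, h.
    apply (continuous_minus (fun z : R*R => u (fst z) (snd z) - Gf s (fst z))
                            (fun z : R*R => Gf s (snd z))).
    - apply (continuous_minus (fun z : R*R => u (fst z) (snd z))
                              (fun z : R*R => Gf s (fst z))).
      + destruct (Hu x y (Hsq x y ltac:(lra) ltac:(lra))) as (_&_&_&_&_&_&Hc&_). exact Hc.
      + apply (@continuous_comp (prod_UniformSpace R_UniformSpace R_UniformSpace) R_UniformSpace R_UniformSpace fst (Gf s) (x,y)). apply continuous_fst.
        simpl. apply (@ex_derive_continuous R_AbsRing R_NormedModule). eexists. apply Gf_der.
        assert (0 < s^2 - x^2) by (apply Hq; lra). lra.
    - apply (@continuous_comp (prod_UniformSpace R_UniformSpace R_UniformSpace) R_UniformSpace R_UniformSpace snd (Gf s) (x,y)). apply continuous_snd.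
      simpl. apply (@ex_derive_continuous R_AbsRing R_NormedModule). eexists. apply Gf_der.
      assert (0 < s^2 - y^2) by (apply Hq; lra). lra. }
  destruct Hab as [Ha Hb].
  assert (Hhab : h 0 0 <= h a b) by (apply Hmax; split; lra).
  assert (Hmax2 : forall x y, -s < x < s -> -s < y < s -> h x y <= h a b).
  { intros x y Hx Hy.
    destruct (classic (rect (-t) t (-t) t x y)) as [Hr'|Hr'].
    - apply Hmax; auto.
    - assert (u x y <= B) by (apply HB; split; lra).
      assert (0 <= Gf s x) by (apply Gf_pos; auto).
      assert (0 <= Gf s y) by (apply Gf_pos; auto).
      assert (K <= Gf s x \/ K <= Gf s y).
      { destruct (classic (-t <= x <= t)).
        - right. apply Hfar; auto. intro. apply Hr'. split; auto.
        - left. apply Hfar; auto. }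
      unfold h in *. unfold K in *. destruct H3; lra. }
  assert (Hin : in_disk r a b) by (apply Hsq; lra).
  assert (Lx : dx (dx u) a b - G2 s a <= 0).
  { apply (sdmax (fun x => h x b) (fun x => dx u x b - G1 s x) a _ (s - t)); [lra| | |].
    - intros x Hx. apply Rabs_def2 in Hx. apply is_derive_Reals.
      assert (H1 := C2_dx u x b (Hu x b (Hsq x b ltac:(lra) ltac:(lra)))).
      assert (H2 := Gf_der s x ltac:(assert (0 < s^2 - x^2) by (apply Hq; lra); lra)).
      assert (H3 := is_derive_minus _ _ _ _ _ H1 H2).
      assert (H4 := is_derive_minus _ _ _ _ _ H3 (is_derive_const (Gf s b) x)).
      replace (dx u x b - G1 s x) with (minus (minus (dx u x b) (G1 s x)) zero)
        by (unfold minus, plus, opp, zero; simpl; ring).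
      exact H4.
    - apply is_derive_Reals.
      assert (H1 := C2_dxx u a b (Hu a b Hin)).
      assert (H2 := G1_der s a ltac:(assert (0 < s^2 - a^2) by (apply Hq; lra); lra)).
      assert (H3 := is_derive_minus _ _ _ _ _ H1 H2).
      exact H3.
    - intros x Hx. apply Rabs_def2 in Hx. apply Hmax2; lra. }
  assert (Ly : dy (dy u) a b - G2 s b <= 0).
  { apply (sdmax (fun y => h a y) (fun y => dy u a y - G1 s y) b _ (s - t)); [lra| | |].
    - intros y Hy. apply Rabs_def2 in Hy. apply is_derive_Reals.
      assert (H1 := C2_dy u a y (Hu a y (Hsq a y ltac:(lra) ltac:(lra)))).
      assert (H2 := Gf_der s y ltac:(assert (0 < s^2 - y^2) by (apply Hq; lra); lra)).
      assert (H3 := is_derive_minus _ _ _ _ _ H1 (is_derive_const (Gf s a) y)).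
      assert (H4 := is_derive_minus _ _ _ _ _ H3 H2).
      replace (dy u a y - G1 s y) with (minus (minus (dy u a y) zero) (G1 s y))
        by (unfold minus, plus, opp, zero; simpl; ring).
      exact H4.
    - apply is_derive_Reals.
      assert (H1 := C2_dyy u a b (Hu a b Hin)).
      assert (H2 := G1_der s b ltac:(assert (0 < s^2 - b^2) by (apply Hq; lra); lra)).
      assert (H3 := is_derive_minus _ _ _ _ _ H1 H2).
      exact H3.
    - intros y Hy. apply Rabs_def2 in Hy. apply Hmax2; lra. }
  assert (HL := Hlap a b Hin). unfold laplacian in HL.
  assert (Hqa : 0 < s^2 - a^2) by (apply Hq; lra).
  assert (Hqb : 0 < s^2 - b^2) by (apply Hq; lra).
  assert (G2a := G2_le s a Hqa). assert (G2b := G2_le s b Hqb).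
  assert (Ga := Gf_pos s a Hqa). assert (Gb := Gf_pos s b Hqb).
  assert (HU0 := Hpos a b Hin).
  assert (HUW : Gf s a + Gf s b < u a b) by (unfold h in *; lra).
  set (U := u a b) in *.
  assert (He1 : exp ((1 - INR k) * U) <= 1).
  { assert (1 <= INR k) by (apply (le_INR 1); auto).
    assert (Hn : (1 - INR k) * U <= 0) by nra.
    destruct Hn as [Hn|Hn].
    - left. assert (X := exp_increasing _ _ Hn). rewrite exp_0 in X. exact X.
    - rewrite Hn, exp_0. lra. }
  assert (He2 : (1 + U/2)^2 <= exp U).
  { replace (exp U) with (exp (U/2) * exp (U/2)) by (rewrite <- exp_plus; f_equal; field).
    assert (X := exp_ineq1_le (U/2)). nra. }
  nra.
Qed.
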